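(* Let $(A,\mathit{Con},\mid\!\sim)$ be a cumulative nonmonotonic system and $(B,\mathit{Con}^*,\Delta)$ the normal default structure constructed from it as described in the context. Then every $P\in\mathit{Con}$ has a unique extension in $(B,\mathit{Con}^*,\Delta)$, namely $$\delta(P):=\widetilde{P}\cup\{[Q]\mid Q\in\mathit{Con},\ Q\subseteq\widetilde{P},\ \widetilde{Q}=\widetilde{P}\}.$$
   Context: An abstract nonmonotonic system is a triple $(A,\mathit{Con},\mid\!\sim)$ where $\mathit{Con}$ is a collection of finite subsets of $A$ and $\mid\!\sim\ \subseteq\mathit{Con}\times\mathit{Con}$, satisfying: (1) $X\subseteq Y\in\mathit{Con}\Rightarrow X\in\mathit{Con}$; (2) $a\in A\Rightarrow\{a\}\in\mathit{Con}$; (3) $X\mid\!\sim T\Rightarrow X\cup T\in\mathit{Con}$; (4) $Y\subseteq X\Rightarrow X\mid\!\sim Y$; (5) $X\mid\!\sim T$ and $T\cup X\mid\!\sim Y$ imply $X\mid\!\sim Y$; (6) $X\mid\!\sim Y$ and $X\mid\!\sim Z$ imply $X\mid\!\sim Y\cup Z$. It is cumulative if it also satisfies cautious monotony: $X\mid\!\sim\{a\}$ and $X\mid\!\sim\{b\}$ imply $X\cup\{a\}\mid\!\sim\{b\}$. For $X\in\mathit{Con}$, $\widetilde{X}:=\{t\in A\mid X\mid\!\sim\{t\}\}$. Construction: $B:=A\cup\{[X]\mid X\in\mathit{Con}\}$, where $[X]$ are new pairwise distinct tokens. $\Delta:=\{\frac{X:[X]}{[X]}\mid X\in\mathit{Con}\}\cup\{\frac{\{[X]\}:a}{a}\mid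 X\in\mathit{Con},\ a\in\widetilde{X}\setminus X\}$. For finite $W\subseteq B$, $W\in\mathit{Con}^*$ iff (i) $W\cap A\in\mathit{Con}$; (ii) for every pair of tokens $[X],[Y]\in W$, $\widetilde{X}=\widetilde{Y}$; (iii) if $[X]\in W$ then $X\mid\!\sim W\cap A$. An arbitrary subset of $B$ is consistent if all its finite subsets are in $\mathit{Con}^*$. Extensions in $(B,\mathit{Con}^*,\Delta)$: for consistent $x\subseteq B$ and $S\subseteq B$, $\phi(x,S,0)=x$, $\phi(x,S,i+1)=\phi(x,S,i)\cup\{a\mid\frac{X:a}{a}\in\Delta,\ X\subseteq\phi(x,S,i),\ \{a\}\cup S\text{ consistent}\}$, $\Phi(x,S)=\bigcup_i\phi(x,S,i)$; $y$ is an extension of $x$ if $\Phi(x,y)=y$. *)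

(* Defs.v *)
From HB Require Import structures.
From mathcomp Require Import all_boot.
From mathcomp Require Import finmap.

Set Implicit Arguments.
Unset Strict Implicit.
Unset Printing Implicit Defensive.

Local Open Scope fset_scope.

Record NMS (A : choiceType) := {
  Con : {fset A} -> Prop;
  ent : {fset A} -> {fset A} -> Prop;
  ent_Con : forall X Y, ent X Y -> Con X /\ Con Y;
  Con_sub : forall X Y, X `<=` Y -> Con Y -> Con X;
  Con_single : forall a, Con [fset a];
  ent_Con_union : forall X T, ent X T -> Con (X `|` T);
  ent_refl : forall X Y, Con X -> Y `<=` X -> ent X Y;
  ent_cut : forall X T Y, ent X T -> ent (T `|` X) Y -> ent X Y;
  ent_and : forall X Y Z, ent X Y -> ent X Z -> ent X (Y `|` Z)
}.

Section Defs.
Variables (A : choiceType) (N : NMS A).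

Definition cumulative : Prop :=
  forall X a b, ent N X [fset a] -> ent N X [fset b] -> ent N (X `|` [fset a]) [fset b].

Definition tilde (X : {fset A}) (t : A) : Prop := ent N X [fset t].

(* The carrier of B: inl a is a in A, inr X is the new token [X]
   (only tokens with Con X belong to B). *)
Definition Btype : choiceType := (A + {fset A})%type.

Definition inB (b : Btype) : Prop :=
  match b with inl _ => True | inr X => Con N X end.

Definition getl (b : Btype) : option A :=
  match b with inl a => Some a | inr _ => None end.

Definition partA (W : {fset Btype}) : {fset A} := [fset a in pmap getl W].

Definition ConStar (W : {fset Btype}) : Prop :=
  (forall b, b \in W -> inB b) /\
  Con N (partA W) /\
  (forall X Y, inr X \in W -> inr Y \in W -> forall t, tilde X t <-> tilde Y t) /\
  (forall X, inr X \in W -> ent N X (partA W)).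

Definition consistent (x : Btype -> Prop) : Prop :=
  forall W : {fset Btype}, (forall b, b \in W -> x b) -> ConStar W.

(* Delta: normal defaults  Pre : c / c,  given as (prerequisite, conclusion) *)
Definition Delta (Pre : {fset Btype}) (c : Btype) : Prop :=
  (exists X, Con N X /\ Pre = [fset inl x | x in X] /\ c = inr X) \/
  (exists X a, Con N X /\ tilde X a /\ a \notin X /\ Pre = [fset inr X] /\ c = inl a).

Fixpoint phi (x S : Btype -> Prop) (i : nat) : Btype -> Prop :=
  match i with
  | 0 => x
  | i.+1 => fun b => phi x S i b \/
      exists Pre, Delta Pre b /\ (forall p, p \in Pre -> phi x S i p) /\
                  consistent (fun z => z = b \/ S z)
  end.

Definition Phi (x S : Btype -> Prop) (b : Btype) : Prop := exists i, phi x S i b.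

Definition extension (x y : Btype -> Prop) : Prop := forall b, Phi x y b <-> y b.

Definition embA (P : {fset A}) (b : Btype) : Prop :=
  match b with inl a => a \in P | inr _ => False end.

Definition delta (P : {fset A}) (b : Btype) : Prop :=
  match b with
  | inl a => tilde P a
  | inr Q => Con N Q /\ (forall q, q \in Q -> tilde P q) /\
             (forall t, tilde Q t <-> tilde P t)
  end.

End Defs.

(* Main.v *)
Require Import Defs.
From mathcomp Require Import all_boot.
From mathcomp Require Import finmap.

Set Implicit Arguments.
Unset Strict Implicit.
Unset Printing Implicit Defensive.
Local Open Scope fset_scope.

Section Aux.
Variables (A : choiceType) (N : NMS A).

Lemma ent_rmono X T T' : ent N X T -> T' `<=` T -> ent N X T'.
Proof.
move=> H sub; apply: (ent_cut H); apply: ent_refl.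
  by rewrite fsetUC; apply: ent_Con_union.
exact: (fsubset_trans sub (fsubsetUl _ _)).
Qed.

Lemma ent_single X T t : ent N X T -> t \in T -> ent N X [fset t].
Proof. by move=> H tT; apply: (ent_rmono H); rewrite fsub1set. Qed.

Lemma ent_all X T : Con N X -> (forall t, t \in T -> ent N X [fset t]) -> ent N X T.
Proof.
move=> CX; elim/fset1U_rect: T => [|x T _ IH] H.
  by apply: ent_refl => //; apply: fsub0set.
apply: ent_and; first by apply: H; rewrite fsetU11.
by apply: IH => t tT; apply: H; rewrite in_fsetU tT orbT.
Qed.

Lemma cm_gen X T : cumulative N -> ent N X T ->
  forall b, ent N X [fset b] -> ent N (X `|` T) [fset b].
Proof.
move=> cum; elim/fset1U_rect: T => [|x T _ IH] H b Hb.
  by rewrite fsetU0.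
have HT : ent N X T by apply: (ent_rmono H); apply: fsubsetUr.
have Hx : ent N X [fset x] by apply: (ent_single H); rewrite fsetU11.
rewrite fsetUA fsetUAC; apply: cum; exact: IH.
Qed.

Lemma tilde_half P X t : cumulative N -> ent N P X -> ent N X P ->
  tilde N P t -> tilde N X t.
Proof.
move=> cum HPX HXP Ht; rewrite /tilde.
apply: (ent_cut HXP).
exact: (cm_gen cum HPX Ht).
Qed.

Lemma in_partA (W : {fset Btype A}) a : (a \in partA W) = (inl a \in W).
Proof.
rewrite /partA in_fset /= mem_pmap.
apply/mapP/idP => [[b bW] | aW]; last by exists (inl a).
by case: b bW => //= a' aW [->].
Qed.

End Aux.

Section Main.
Variables (A : choiceType) (N : NMS A) (P : {fset A}).
Hypothesis CP : Con N P.

Lemma delta_cons : consistent N (delta N P).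
Proof.
move=> W HW.
have HA : forall t, t \in partA W -> tilde N P t.
  by move=> t; rewrite in_partA => /HW.
split; [|split; [|split]].
- by move=> [a|X] /HW //= [].
- apply: (@Con_sub _ N _ (P `|` partA W)); first exact: fsubsetUr.
  by apply: ent_Con_union; apply: ent_all.
- move=> X Y /HW [_ [_ HX]] /HW [_ [_ HY]] t.
  by rewrite HX HY.
- move=> X /HW [CX [_ HX]]; apply: ent_all => // t /HA.
  by move/HX.
Qed.

Lemma cons_sub (x y : Btype A -> Prop) : consistent N y ->
  (forall b, x b -> y b) -> consistent N x.
Proof. by move=> H sub W HW; apply: H => b /HW /sub. Qed.

Lemma phi_mono x S i j b : i <= j -> phi N x S i b -> phi N x S j b.
Proof.
elim: j => [|j IH]; first by rewrite leqn0 => /eqP ->.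
rewrite leq_eqVlt => /orP [/eqP -> //|]; rewrite ltnS => Hij H.
by left; apply: IH.
Qed.

Lemma delta_Phi S : (forall b, S b -> delta N P b) ->
  forall b, delta N P b -> Phi N (embA P) S b.
Proof.
move=> HS.
have Hc : forall b, delta N P b -> consistent N (fun z => z = b \/ S z).
  move=> b Hb; apply: (cons_sub delta_cons) => z [->|/HS] //.
have dP : delta N P (inr P).
  split => //; split => // q qP.
  by apply: ent_refl => //; rewrite fsub1set.
have H1 : phi N (embA P) S 1 (inr P).
  right; exists [fset inl x | x in P]; split.
    by left; exists P.
  split; last exact: Hc.
  by move=> p /imfsetP [x /= xP ->].
have Hl : forall a, tilde N P a -> phi N (embA P) S 2 (inl a).
  move=> a Ha; case: (boolP (a \in P)) => aP.
    by apply: (@phi_mono _ _ 0).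
  right; exists [fset inr P]; split.
    by right; exists P, a.
  split; last exact: Hc.
  by move=> p; rewrite in_fset1 => /eqP ->.
move=> [a|Q] Hb.
  by exists 2; apply: Hl.
exists 3; right; exists [fset inl x | x in Q]; split.
  by left; exists Q; case: Hb.
split; last exact: Hc.
move=> p /imfsetP [x /= xQ ->]; apply: Hl.
by case: Hb => _ [] /(_ _ xQ).
Qed.

Hypothesis cum : cumulative N.

Lemma Phi_delta S : (forall b, embA P b -> S b) ->
  forall i b, phi N (embA P) S i b -> delta N P b.
Proof.
move=> HS; elim => [|i IH] b.
  case: b => //= a aP; apply: ent_refl => //; by rewrite fsub1set.
move=> [/IH //|[Pre [HD [HPre Hc]]]].
case: HD => [[X [CX [EP Eb]]] | [X [a [CX [Ha [aX [EP Eb]]]]]]]; subst Pre b.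
  have HXP : forall q, q \in X -> tilde N P q.
    move=> q qX; apply: (IH (inl q)); apply: HPre.
    by apply/imfsetP; exists q.
  split => //; split => // t.
  have ePX : ent N P X by apply: ent_all.
  pose W := inr X |` [fset inl x | x in P].
  have CW : ConStar N W.
    apply: Hc => z; rewrite in_fsetU in_fset1 => /orP [/eqP ->|] /=; first by left.
    by move=> /imfsetP [x /= xP ->]; right; apply: HS.
  have eXW : ent N X (partA W).
    by case: CW => _ [_ [_ H]]; apply: H; rewrite fsetU11.
  have eXP : ent N X P.
    apply: ent_all => // p pP; apply: (ent_single eXW).
    rewrite in_partA in_fsetU; apply/orP; right.
    by apply/imfsetP; exists p.
  split; first exact: tilde_half.
  exact: tilde_half.
have [_ [_ HX]] := IH (inr X) (HPre _ (fset11 _)).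
by apply/HX.
Qed.

End Main.

Theorem lemma6 (A : choiceType) (N : NMS A) :
  cumulative N ->
  forall P : {fset A}, Con N P ->
    extension N (embA P) (delta N P) /\
    (forall y : Btype A -> Prop, extension N (embA P) y ->
       forall b, y b <-> delta N P b).
Proof.
move=> cum P CP.
have embD : forall b, embA P b -> delta N P b.
  case=> //= a aP; apply: ent_refl => //; by rewrite fsub1set.
split.
  move=> b; split.
    by move=> [i]; apply: (Phi_delta CP cum embD).
  exact: (delta_Phi CP).
move=> y Hy.
have embY : forall b, embA P b -> y b.
  by move=> b Hb; apply/Hy; exists 0.
have yD : forall b, y b -> delta N P b.
  by move=> b /Hy [i]; apply: (Phi_delta CP cum embY).
move=> b; split; first exact: yD.
by move=> Hb; apply/Hy; apply: (delta_Phi CP yD).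
Qed.
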